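(* Let $x^{(0)}\in\mathbb R^n$, $h_0:=H(x^{(0)})$, $v_i^{(0)}:=a_1x_1^{(0)}+\dots+a_ix_i^{(0)}$ ($v_0^{(0)}:=0$), and let $x^{(m)}:=\mathcal K^m(x^{(0)})$ be the iterates of the map $\tilde x_i=x_i\dfrac{(1-\epsilon H)(1+\epsilon H)}{(1-\epsilon H+2\epsilon v_{i-1})(1-\epsilon H+2\epsilon v_i)}$. If $h_0\neq0$, then, writing $\rho:=\dfrac{1+\epsilon h_0}{1-\epsilon h_0}$, $$x_i^{(m)}=x_i^{(0)}\frac{\rho^m h_0^2}{\big(h_0+v^{(0)}_{i-1}(\rho^m-1)\big)\big(h_0+v^{(0)}_i(\rho^m-1)\big)},\qquad i=1,\dots,n,$$ and if $h_0=0$, $$x_i^{(m)}=x_i^{(0)}\frac{1}{\big(1+2m\epsilon v^{(0)}_{i-1}\big)\big(1+2m\epsilon v^{(0)}_i\big)},\qquad i=1,\dots,n.$$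
   Context: $(a_1,\dots,a_n)\in\mathbb R^n\setminus\{0\}$, $\epsilon>0$ small, $H=a_1x_1+\dots+a_nx_n$, $v_0:=0$, $v_i:=a_1x_1+\dots+a_ix_i$. (Formulas hold whenever the iterates are defined.) *)

(* Defs.v *)
From Stdlib Require Import Reals Lra Lia.
Open Scope R_scope.

(* A vector of R^n is represented as x : nat -> R, with components x 1, ..., x n
   (values at other indices are irrelevant). *)

Fixpoint v (a x : nat -> R) (i : nat) : R :=
  match i with
  | O => 0
  | S k => v a x k + a (S k) * x (S k)
  end.

Definition H (n : nat) (a x : nat -> R) : R := v a x n.

Definition K (n : nat) (a : nat -> R) (eps : R) (x : nat -> R) : nat -> R :=
  fun i => x i * ((1 - eps * H n a x) * (1 + eps * H n a x)) /
           ((1 - eps * H n a x + 2 * eps * v a x (i - 1)) *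
            (1 - eps * H n a x + 2 * eps * v a x i)).

Definition K_defined (n : nat) (a : nat -> R) (eps : R) (x : nat -> R) : Prop :=
  forall i, (1 <= i <= n)%nat ->
    (1 - eps * H n a x + 2 * eps * v a x (i - 1)) *
    (1 - eps * H n a x + 2 * eps * v a x i) <> 0.

Definition Kiter (n : nat) (a : nat -> R) (eps : R) (m : nat) (x0 : nat -> R)
  : nat -> R := Nat.iter m (K n a eps) x0.

(* Main.v *)
Require Import Defs.
From Stdlib Require Import Reals Lra Lia.
Open Scope R_scope.

Definition rho (eps h : R) := (1 + eps * h) / (1 - eps * h).
Definition Qn (a x0 : nat -> R) (eps h : R) (m i : nat) :=
  h + v a x0 i * (rho eps h ^ m - 1).
Definition Qz (a x0 : nat -> R) (eps : R) (m i : nat) :=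
  1 + 2 * INR m * eps * v a x0 i.

Lemma Kiter_S n a eps m x0 :
  Kiter n a eps (S m) x0 = K n a eps (Kiter n a eps m x0).
Proof. reflexivity. Qed.

Lemma prod_nz_l (A B : R) : A * B <> 0 -> A <> 0.
Proof. intros H E; apply H; rewrite E; ring. Qed.
Lemma prod_nz_r (A B : R) : A * B <> 0 -> B <> 0.
Proof. intros H E; apply H; rewrite E; ring. Qed.

Lemma main_nz n a eps x0 M :
  (1 <= n)%nat ->
  (forall k, (k < M)%nat -> K_defined n a eps (Kiter n a eps k x0)) ->
  H n a x0 <> 0 -> 1 + eps * H n a x0 <> 0 ->
  forall m, (m <= M)%nat ->
  (forall i, (i <= n)%nat -> Qn a x0 eps (H n a x0) m i <> 0) /\
  (forall i, (1 <= i <= n)%nat ->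
     Kiter n a eps m x0 i =
       x0 i * (rho eps (H n a x0) ^ m * H n a x0 ^ 2) /
       (Qn a x0 eps (H n a x0) m (i - 1) * Qn a x0 eps (H n a x0) m i)).
Proof.
  intros Hn Hdef hnz hp.
  set (h0 := H n a x0) in *.
  induction m as [|m IH]; intros Hm.
  - split.
    + intros i _. unfold Qn. simpl. replace (h0 + v a x0 i * (1 - 1)) with h0 by ring. exact hnz.
    + intros i _. unfold Qn. simpl.
      replace (h0 + v a x0 (i - 1) * (1 - 1)) with h0 by ring.
      replace (h0 + v a x0 i * (1 - 1)) with h0 by ring. field. exact hnz.
  - destruct (IH ltac:(lia)) as [Qnz Fm].
    assert (hm1 : 1 - eps * h0 <> 0).
    { assert (D := Hdef 0%nat ltac:(lia) 1%nat ltac:(lia)). apply prod_nz_l in D.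
      simpl in D. unfold h0. intro E; apply D. simpl. rewrite E. ring. }
    assert (rnz : rho eps h0 <> 0).
    { unfold rho. apply Rmult_integral_contrapositive_currified; [exact hp|].
      apply Rinv_neq_0_compat; exact hm1. }
    set (X := Kiter n a eps m x0).
    set (r := rho eps h0 ^ m).
    assert (rnz' : r <> 0) by (apply pow_nonzero; exact rnz).
    assert (hv : forall i, (i <= n)%nat -> v a X i = h0 * v a x0 i * r / Qn a x0 eps h0 m i).
    { induction i as [|i IHi]; intros Hi.
      - simpl. unfold Qn. simpl. field. intro E; apply hnz. rewrite <- E. ring.
      - simpl v. rewrite IHi by lia. unfold X. rewrite Fm by lia.
        replace (S i - 1)%nat with i by lia.
        assert (Q1 := Qnz i ltac:(lia)). assert (Q2 := Qnz (S i) ltac:(lia)).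
        fold r. unfold Qn in *. simpl v in *. fold r in Q1, Q2 |- *.
        field. split; assumption. }
    assert (hH : H n a X = h0).
    { unfold H. rewrite hv by lia. unfold Qn. fold r.
      change (v a x0 n) with h0. field.
      intro E; apply hnz.
      replace h0 with ((h0 + h0 * (r - 1)) / r) by (field; exact rnz').
      rewrite E. unfold Rdiv. ring. }
    assert (hD : forall j, (j <= n)%nat ->
      1 - eps * H n a X + 2 * eps * v a X j =
      (1 - eps * h0) * Qn a x0 eps h0 (S m) j / Qn a x0 eps h0 m j).
    { intros j Hj. rewrite hH, hv by exact Hj.
      assert (Q1 := Qnz j Hj). unfold Qn in *. fold r in Q1 |- *.
      simpl pow. fold r. unfold rho in *. field. split; assumption. }
    assert (Qnz' : forall j, (j <= n)%nat -> Qn a x0 eps h0 (S m) j <> 0).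
    { intros j Hj. destruct j as [|j].
      - unfold Qn. simpl v. replace (h0 + 0 * (rho eps h0 ^ S m - 1)) with h0 by ring. exact hnz.
      - assert (D := Hdef m ltac:(lia) (S j) ltac:(lia)). apply prod_nz_r in D.
        fold X in D. rewrite hD in D by exact Hj.
        intro E; apply D. rewrite E. unfold Rdiv. ring. }
    split; [exact Qnz'|].
    intros i Hi. rewrite Kiter_S. fold X. unfold K.
    rewrite (hD (i-1)%nat) by lia. rewrite (hD i) by lia. rewrite hH.
    unfold X. rewrite Fm by exact Hi. fold r.
    assert (A1 := Qnz (i-1)%nat ltac:(lia)). assert (A2 := Qnz i ltac:(lia)).
    assert (B1 := Qnz' (i-1)%nat ltac:(lia)). assert (B2 := Qnz' i ltac:(lia)).
    simpl pow. fold r. unfold rho. field.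
    repeat split; try assumption.
Qed.

Lemma main_z n a eps x0 M :
  (1 <= n)%nat ->
  (forall k, (k < M)%nat -> K_defined n a eps (Kiter n a eps k x0)) ->
  H n a x0 = 0 ->
  forall m, (m <= M)%nat ->
  (forall i, (i <= n)%nat -> Qz a x0 eps m i <> 0) /\
  (forall i, (1 <= i <= n)%nat ->
     Kiter n a eps m x0 i =
       x0 i * (1 / (Qz a x0 eps m (i - 1) * Qz a x0 eps m i))).
Proof.
  intros Hn Hdef hz.
  induction m as [|m IH]; intros Hm.
  - split.
    + intros i _. unfold Qz. simpl. replace (1 + 2 * 0 * eps * v a x0 i) with 1 by ring. lra.
    + intros i _. unfold Qz. simpl. field.
  - destruct (IH ltac:(lia)) as [Qnz Fm].
    set (X := Kiter n a eps m x0).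
    assert (hv : forall i, (i <= n)%nat -> v a X i = v a x0 i / Qz a x0 eps m i).
    { induction i as [|i IHi]; intros Hi.
      - simpl. unfold Qz. simpl. field. 
      - simpl v. rewrite IHi by lia. unfold X. rewrite Fm by lia.
        replace (S i - 1)%nat with i by lia.
        assert (Q1 := Qnz i ltac:(lia)). assert (Q2 := Qnz (S i) ltac:(lia)).
        unfold Qz in *. simpl v in *.
        field. repeat split; assumption. }
    assert (hH : H n a X = 0).
    { unfold H. rewrite hv by lia. fold (H n a x0). rewrite hz. unfold Rdiv. ring. }
    assert (hD : forall j, (j <= n)%nat ->
      1 - eps * H n a X + 2 * eps * v a X j =
      Qz a x0 eps (S m) j / Qz a x0 eps m j).
    { intros j Hj. rewrite hH, hv by exact Hj.
      assert (Q1 := Qnz j Hj). unfold Qz in *. rewrite S_INR. field. exact Q1. }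
    assert (Qnz' : forall j, (j <= n)%nat -> Qz a x0 eps (S m) j <> 0).
    { intros j Hj. destruct j as [|j].
      - unfold Qz. simpl v. replace (1 + 2 * INR (S m) * eps * 0) with 1 by ring. lra.
      - assert (D := Hdef m ltac:(lia) (S j) ltac:(lia)). apply prod_nz_r in D.
        fold X in D. rewrite hD in D by exact Hj.
        intro E; apply D. rewrite E. unfold Rdiv. ring. }
    split; [exact Qnz'|].
    intros i Hi. rewrite Kiter_S. fold X. unfold K.
    rewrite (hD (i-1)%nat) by lia. rewrite (hD i) by lia. rewrite hH.
    unfold X. rewrite Fm by exact Hi.
    assert (A1 := Qnz (i-1)%nat ltac:(lia)). assert (A2 := Qnz i ltac:(lia)).
    assert (B1 := Qnz' (i-1)%nat ltac:(lia)). assert (B2 := Qnz' i ltac:(lia)).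
    field. repeat split; assumption.
Qed.

Lemma K_zero n a eps x : (forall i, x i = 0) -> forall i, K n a eps x i = 0.
Proof. intros Hx i. unfold K. rewrite Hx. unfold Rdiv. ring. Qed.

Lemma rho0_case n a eps x0 : 1 + eps * H n a x0 = 0 ->
  forall m, (1 <= m)%nat -> forall i, Kiter n a eps m x0 i = 0.
Proof.
  intros hp m Hm. induction m as [|m IH]; [lia|].
  destruct m as [|m].
  - intros i. rewrite Kiter_S. simpl Kiter. unfold K. rewrite hp. unfold Rdiv. ring.
  - rewrite Kiter_S. apply K_zero. apply IH. lia.
Qed.

Theorem proposition3p4 (n : nat) (a : nat -> R) (eps : R) (x0 : nat -> R) (m : nat) :
  (exists j, (1 <= j <= n)%nat /\ a j <> 0) ->
  0 < eps ->
  (forall k, (k < m)%nat -> K_defined n a eps (Kiter n a eps k x0)) ->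
  let h0 := H n a x0 in
  (h0 <> 0 ->
     let rho := (1 + eps * h0) / (1 - eps * h0) in
     forall i, (1 <= i <= n)%nat ->
       Kiter n a eps m x0 i =
         x0 i * (rho ^ m * h0 ^ 2) /
         ((h0 + v a x0 (i - 1) * (rho ^ m - 1)) * (h0 + v a x0 i * (rho ^ m - 1)))) /\
  (h0 = 0 ->
     forall i, (1 <= i <= n)%nat ->
       Kiter n a eps m x0 i =
         x0 i * (1 / ((1 + 2 * INR m * eps * v a x0 (i - 1)) *
                      (1 + 2 * INR m * eps * v a x0 i)))).
Proof.
  intros [j [Hj _]] _ Hdef h0. split.
  - intros hnz rh i Hi.
    destruct (Req_dec (1 + eps * h0) 0) as [hp|hp].
    + destruct m as [|m].
      * simpl. field. exact hnz.
      * rewrite (rho0_case n a eps x0 hp (S m) ltac:(lia)).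
        unfold rh. rewrite hp. simpl. unfold Rdiv. ring.
    + destruct (main_nz n a eps x0 m ltac:(lia) Hdef hnz hp m (le_n _)) as [_ F].
      rewrite F by exact Hi. reflexivity.
  - intros hz i Hi.
    destruct (main_z n a eps x0 m ltac:(lia) Hdef hz m (le_n _)) as [_ F].
    rewrite F by exact Hi. reflexivity.
Qed.
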